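(* Let $n,r\ge 1$, $V=\mathbb F_2^n$, and for each $1\le i\le r$ let $\rho_i\in\mathrm{Sym}(V)\setminus\mathrm{AGL}(V)$ and $\theta_i\in\mathrm{GL}(V)$. Define $\overline{\rho}_i,\overline\theta_i\in\mathrm{Sym}(V\times V)$ by $(x,y)\overline\rho_i=(x+y,\ y+(x+y)\rho_i)$ and $(x,y)\overline\theta_i=((x+y)\theta_i,\ y)$. If for some index $i\in\{1,\dots,r\}$ the group $\langle\rho_i,T_n\rangle$ (the group generated by the $i$-th round functions $\rho_i\sigma_k$, $k\in V$, of the corresponding substitution permutation network) is primitive on $V$, then the group $$\big\langle \langle\overline\rho_i,\overline\theta_i,T_{2n}\rangle \;\big|\; 1\le i\le r\big\rangle\le\mathrm{Sym}(V\times V)$$ is primitive on $V\times V$.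
   Context: Maps act on the right: $x\rho$ is the image of $x$ under $\rho$. $T_n$ is the group of translations $\sigma_v:x\mapsto x+v$ of $V$, and $T_{2n}$ is the group of translations $(x,y)\mapsto(x+v,y+w)$ of $V\times V$. $\mathrm{AGL}(V)$ is the group of affine permutations of $V$, $\mathrm{GL}(V)$ the group of linear ones. A group $G$ acting on a set $M$ is primitive if it is transitive and there is no $G$-invariant partition of $M$ other than $\{M\}$ and the partition into singletons. *)

(* Defs.v *)
From mathcomp Require Import all_boot all_order all_algebra all_fingroup all_solvable.
Set Implicit Arguments. Unset Strict Implicit. Unset Printing Implicit Defensive.
Import GRing.Theory.
Local Open Scope ring_scope.

(* V = F_2^n as row vectors; maps act on the right (x *m A), matching
   MathComp's convention (s * t) x = t (s x) for permutations. *)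
Notation Vec n := 'rV['F_2]_n.

Definition AGL n : {set {perm Vec n}} :=
  [set p : {perm Vec n} | [exists A : 'M['F_2]_n, exists b : Vec n, forall x, p x == x *m A + b]].
Definition GL n : {set {perm Vec n}} :=
  [set p : {perm Vec n} | [exists A : 'M['F_2]_n, forall x, p x == x *m A]].

Lemma transl_inj n (v : Vec n) : injective (fun x : Vec n => x + v).
Proof. exact: addIr. Qed.
Definition transl n (v : Vec n) : {perm Vec n} := perm (@transl_inj n v).
Definition Tn n : {set {perm Vec n}} := [set transl v | v : Vec n].

Lemma transl2_inj n (v w : Vec n) :
  injective (fun p : Vec n * Vec n => (p.1 + v, p.2 + w)).
Proof. by move=> [x y] [x' y'] [/addIr -> /addIr ->]. Qed.
Definition transl2 n (v w : Vec n) : {perm Vec n * Vec n} := perm (@transl2_inj n v w).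
Definition T2n n : {set {perm Vec n * Vec n}} :=
  [set transl2 vw.1 vw.2 | vw : Vec n * Vec n].

Lemma rhobar_inj n (rho : {perm Vec n}) :
  injective (fun p : Vec n * Vec n => (p.1 + p.2, p.2 + rho (p.1 + p.2))).
Proof.
move=> [x y] [x' y'] /= [e1 e2].
rewrite e1 in e2; move/addIr: e2 => ey; rewrite ey in e1.
by move/addIr: e1 => ->; rewrite ey.
Qed.
Definition rhobar n (rho : {perm Vec n}) : {perm Vec n * Vec n} :=
  perm (@rhobar_inj n rho).

Lemma thetabar_inj n (theta : {perm Vec n}) :
  injective (fun p : Vec n * Vec n => (theta (p.1 + p.2), p.2)).
Proof.
move=> [x y] [x' y'] /= [/perm_inj e1 e2]; rewrite e2 in e1 *.
by move/addIr: e1 => ->.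
Qed.
Definition thetabar n (theta : {perm Vec n}) : {perm Vec n * Vec n} :=
  perm (@thetabar_inj n theta).

(* Main.v *)
From HB Require Import structures.
Require Import Defs.
From mathcomp Require Import all_boot all_order all_algebra all_fingroup all_solvable.
From mathcomp Require Import ring.
Set Implicit Arguments. Unset Strict Implicit. Unset Printing Implicit Defensive.
Import GRing.Theory.

Section Gen.
Variable X : finZmodType.
Local Open Scope ring_scope.

Definition tr (v : X) : {perm X} := perm (@addIr X v).
Lemma trE v x : tr v x = x + v. Proof. by rewrite permE. Qed.

Lemma tr0 : tr 0 = 1%g. Proof. by apply/permP=> x; rewrite trE perm1 addr0. Qed.
Lemma trD u v : tr (u + v) = (tr u * tr v)%g.
Proof. by apply/permP=> x; rewrite permM !trE addrA. Qed.
Lemma trN v : tr (- v) = (tr v)^-1%g.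
Proof. by apply: (mulgI (tr v)); rewrite mulgV -trD addrN tr0. Qed.

Definition zsub (W : {set X}) :=
  0 \in W /\ forall x y, x \in W -> y \in W -> x - y \in W.

Lemma zsubN (W : {set X}) : zsub W -> forall x, x \in W -> - x \in W.
Proof. by move=> [W0 WB] x Wx; rewrite -sub0r WB. Qed.
Lemma zsubD (W : {set X}) : zsub W -> forall x y, x \in W -> y \in W -> x + y \in W.
Proof. by move=> hW x y Wx Wy; rewrite -[y]opprK; apply: hW.2 => //; apply: zsubN. Qed.

Definition invar (G : {set {perm X}}) (W : {set X}) :=
  forall g, g \in G -> forall x w, w \in W -> g (x + w) - g x \in W.

Definition Iset (W : {set X}) : {set {perm X}} :=
  [set g : {perm X} | [forall x, [forall w, (w \in W) ==> (g (x + w) - g x \in W)]]].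

Lemma IsetP (W : {set X}) (g : {perm X}) : reflect (forall x w, w \in W -> g (x + w) - g x \in W) (g \in Iset W).
Proof.
rewrite inE; apply: (iffP forallP) => [h x w Ww | h x].
  by have /forallP/(_ w)/implyP := h x; apply.
by apply/forallP=> w; apply/implyP; apply: h.
Qed.

Lemma Iset_group (W : {set X}) : group_set (Iset W).
Proof.
apply/andP; split.
  by apply/IsetP=> x w Ww; rewrite !perm1 addrC addKr.
apply/subsetP=> g /mulsgP[a b /IsetP Ia /IsetP Ib ->].
apply/IsetP=> x w Ww; rewrite !permM.
have := Ib (a x) (a (x + w) - a x) (Ia x w Ww); rewrite [a x + _]addrC.
by rewrite subrK.
Qed.

Lemma invar_gen (A : {set {perm X}}) (W : {set X}) :
  (forall g, g \in A -> forall x w, w \in W -> g (x + w) - g x \in W) ->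
  invar <<A>>%g W.
Proof.
move=> hA g; have: (<<A>> \subset Group (Iset_group W))%g.
  by rewrite gen_subG; apply/subsetP=> a Aa; apply/IsetP; apply: hA.
by move/subsetP=> s /s /IsetP.
Qed.

Lemma actPE (x : X) (s : {perm X}) : 'P%act x s = s x. Proof. by []. Qed.

Lemma transP (G : {group {perm X}}) :
  (forall v, tr v \in G) -> [transitive G, on [set: X] | 'P].
Proof.
move=> trG; apply/imsetP; exists 0 => //; apply/eqP; rewrite eq_sym eqEsubset subsetT /=.
apply/subsetP=> y _; have := mem_orbit 'P 0 (trG y).
by rewrite /= actPE trE add0r.
Qed.

Lemma key (G H : {group {perm X}}) :
  (forall v, tr v \in G) -> ('C_G[0 | 'P] \subset H)%g -> (H \subset G)%g ->
  forall h, h \in H -> tr (h 0) \in H.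
Proof.
move=> trG sCH sHG h Hh.
have: (h * tr (- h 0))%g \in H.
  apply: (subsetP sCH); rewrite inE (groupM (subsetP sHG _ Hh)) //=.
  by apply/astab1P; rewrite actPE permM trE addrN.
by rewrite groupMl // trN groupV.
Qed.

Lemma prim_of (G : {group {perm X}}) :
  (forall v, tr v \in G) ->
  (forall W, zsub W -> invar G W -> W = [set 0] \/ W = setT) ->
  [primitive G, on [set: X] | 'P].
Proof.
move=> trG hW; rewrite (trans_prim_astab (x:=0)) ?inE ?transP //.
apply/maximal_eqP; split; first exact: subsetIl.
move=> H sCH sHG.
have kH := key trG sCH sHG.
pose W := [set v | tr v \in H].
have zW : zsub W.
  split; first by rewrite inE tr0 group1.
  by move=> x y; rewrite !inE => Hx Hy; rewrite trD trN groupM ?groupV.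
have iW : invar G W.
  move=> g Gg x w; rewrite inE => Hw.
  pose k := (tr x * g * tr (- g x))%g.
  have Gk : k \in G by rewrite !groupM.
  have k0 : k 0 = 0 by rewrite !permM !trE add0r addrN.
  have Hk : k \in H.
    by apply: (subsetP sCH); rewrite inE Gk; apply/astab1P; rewrite actPE.
  have kw : k w = g (x + w) - g x by rewrite /k !permM !trE [w + x]addrC.
  clearbody k.
  have ki : k^-1%g 0 = 0 by rewrite -{1}k0 permK.
  have Hm : (k^-1 * tr w * k)%g \in H by apply: groupM => //; apply: groupM => //; exact: groupVr.
  by have := kH _ Hm; rewrite !permM ki trE add0r kw inE.
have [W0|WT] := hW W zW iW.
  left; apply/eqP; rewrite eqEsubset sCH andbT.
  apply/subsetP=> h Hh; rewrite inE (subsetP sHG _ Hh) /=.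
  apply/astab1P; rewrite actPE.
  have : h 0 \in W by rewrite inE kH.
  by rewrite W0 inE => /eqP.
right; apply/eqP; rewrite eqEsubset sHG /=.
apply/subsetP=> g Gg.
have : g 0 \in W by rewrite WT inE.
rewrite inE => Hg0.
have : (g * tr (- g 0))%g \in H.
  apply: (subsetP sCH); rewrite inE groupM //=.
  by apply/astab1P; rewrite actPE permM trE addrN.
by rewrite groupMr // trN groupV.
Qed.

Lemma invar_fix (G : {set {perm X}}) (W : {set X}) (g : {perm X}) :
  invar G W -> g \in G -> g 0 = 0 -> forall x, (g x \in W) = (x \in W).
Proof.
move=> iW Gg g0.
have sub : [set g x | x in W] \subset W.
  by apply/subsetP=> _ /imsetP[x Wx ->]; have := iW g Gg 0 x Wx; rewrite add0r g0 subr0.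
have eqS : [set g x | x in W] = W.
  apply/eqP; rewrite eqEcard sub (card_imset _ (@perm_inj _ g)) leqnn //.
by move=> x; rewrite -{1}eqS (mem_imset _ _ (@perm_inj _ g)).
Qed.

Lemma noinvar_of (G : {group {perm X}}) :
  (forall v, tr v \in G) ->
  [primitive G, on [set: X] | 'P] ->
  forall W, zsub W -> invar G W -> W = [set 0] \/ W = setT.
Proof.
move=> trG prim W zW iW.
move: prim; rewrite (trans_prim_astab (x:=0)) ?inE ?transP //.
move/maximal_eqP=> [_ maxC].
have [->|Wn] := eqVneq W [set 0]; first by left.
have [w /andP[wn0 Ww]] : exists w, (w != 0) && (w \in W).
  apply/existsP; apply: contraNT Wn => /existsPn h; apply/eqP/setP=> v; rewrite inE.
  apply/idP/eqP=> [Wv|->]; last exact: zW.1.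
  by apply/eqP; have := h v; rewrite Wv andbT negbK.
pose H := 'N_G(W | 'P)%G.
have sCH : ('C_G[0 | 'P] \subset H)%g.
  apply/subsetP=> g; rewrite inE => /andP[Gg /astab1P]; rewrite actPE => g0.
  rewrite inE Gg /=; apply/astabsP=> x; rewrite actPE.
  exact: (invar_fix iW Gg g0 x).
have sHG : (H \subset G)%g by apply: subsetIl.
have trW : forall v, v \in W -> tr v \in H.
  move=> v Wv; rewrite inE trG /=; apply/astabsP=> x; rewrite actPE trE.
  apply/idP/idP=> Wx; last exact: zsubD.
  by rewrite -(addrK v x); apply: zW.2.
have [HC|HG] := maxC H sCH sHG.
  exfalso; have : tr w \in H by apply: trW.
  rewrite HC inE => /andP[_ /astab1P]; rewrite actPE trE add0r.
  by move/eqP; rewrite (negbTE wn0).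
right; apply/setP=> v; rewrite inE.
have : tr v \in H by rewrite HG.
rewrite inE => /andP[_ /astabsP/(_ 0)]; rewrite actPE trE add0r => ->.
exact: zW.1.
Qed.

End Gen.

Local Open Scope ring_scope.

Definition VV n := (Vec n * Vec n)%type.
HB.instance Definition _ n := Finite.on (VV n).
HB.instance Definition _ n := GRing.Zmodule.on (VV n).

Ltac vr := apply/rowP => ?; rewrite !mxE; ring.

Lemma eq_mem (T : finType) (W : {set T}) x y : x \in W -> x = y -> y \in W.
Proof. by move=> h <-. Qed.

Lemma F2_cases (a : 'F_2) : a = 0 \/ a = 1.
Proof. move: a => [[|[|k]] Hk] //. by left; apply: val_inj. by right; apply: val_inj. Qed.

Lemma affine_AGL n (r : {perm Vec n}) :
  (forall s q, r (q + s) - r q = r s - r 0) -> r \in AGL n.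
Proof.
move=> h; pose f x := r x - r 0.
have fD : forall a b, f (a + b) = f a + f b.
  move=> a b; have e2 : r (a + b) = r b - r 0 + r a.
    by apply/eqP; rewrite -subr_eq h.
  by rewrite /f e2; vr.
have f0 : f 0 = 0 by rewrite /f subrr.
have fZ : forall (c : 'F_2) v, f (c *: v) = c *: f v.
  move=> c v; case: (F2_cases c) => ->; first by rewrite !scale0r.
  by rewrite !scale1r.
pose A0 : 'M['F_2]_n := \matrix_(i, j) f (delta_mx 0 i) 0 j.
have fA : forall x, f x = x *m A0.
  move=> x; rewrite mulmx_sum_row {1}(row_sum_delta x).
  rewrite (big_morph f fD f0); apply: eq_bigr => i _; rewrite fZ; congr (_ *: _).
  by apply/rowP=> j; rewrite !mxE.
rewrite inE; apply/existsP; exists A0; apply/existsP; exists (r 0).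
apply/forallP=> x; apply/eqP; rewrite -fA /f subrK //.
Qed.


Lemma eqm (T : Type) (P : T -> Prop) x y : P x -> x = y -> P y.
Proof. by move=> h <-. Qed.

Lemma core n (r th : {perm Vec n}) (A : 'M['F_2]_n) :
 (0 < n)%N -> r \notin AGL n -> (forall x, th x = x *m A) ->
 (forall U : {set Vec n}, zsub U ->
    (forall x w, w \in U -> r (x + w) - r x \in U) -> U = [set 0] \/ U = setT) ->
 forall W : {set VV n}, zsub W ->
 (forall x w, w \in W -> rhobar r (x + w) - rhobar r x \in W) ->
 (forall x w, w \in W -> thetabar th (x + w) - thetabar th x \in W) ->
 W = [set 0] \/ W = setT.
Proof.
move=> n0 nA thE prim W zW hr ht.
have W0 : ((0, 0) : VV n) \in W by exact: zW.1.
have WB : forall a b c d, (a, b) \in W -> (c, d) \in W -> (a - c, b - d) \in W.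
  by move=> a b c d h1 h2; exact: (zW.2 _ _ h1 h2).
have WD : forall a b c d, (a, b) \in W -> (c, d) \in W -> (a + c, b + d) \in W.
  by move=> a b c d h1 h2; exact: (zsubD zW h1 h2).
have thD : forall a b, th (a + b) = th a + th b by move=> a b; rewrite !thE mulmxDl.
have th0 : th 0 = 0 by rewrite thE mul0mx.
have hR : forall w1 w2 q, (w1, w2) \in W ->
    (w1 + w2, w2 + (r (q + (w1 + w2)) - r q)) \in W.
  move=> w1 w2 q Ww; have := hr (q, 0) (w1, w2) Ww; rewrite !permE /=.
  rewrite !add0r !addr0 -addrA => H; apply: (eqm (P := fun z : VV n => z \in W) H); apply: injective_projections => /=; vr.
have hT : forall w1 w2, (w1, w2) \in W -> (th (w1 + w2), w2) \in W.
  move=> w1 w2 Ww; have := ht (0, 0) (w1, w2) Ww; rewrite !permE /=.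
  rewrite !add0r ?addr0 th0 => H; apply: (eqm (P := fun z : VV n => z \in W) H); apply: injective_projections => /=; vr.
have memW : forall p p' : VV n, p \in W -> p = p' -> p' \in W.
  by move=> p p' h <-.
pose E := [set e | (e, 0) \in W].
pose K := [set k | (0, k) \in W].
have thE_E : forall e, e \in E -> th e \in E.
  by move=> e; rewrite !inE => He; have := hT _ _ He; rewrite addr0.
have thEeq : [set th x | x in E] = E.
  apply/eqP; rewrite eqEcard (card_imset _ (@perm_inj _ th)) leqnn andbT.
  by apply/subsetP=> _ /imsetP[x Ex ->]; exact: thE_E.
have KE : forall k, k \in K -> k \in E.
  move=> k; rewrite inE => Hk.
  have : th k \in E.
    by rewrite inE; have := WB _ _ _ _ (hT _ _ Hk) Hk; rewrite add0r subr0 subrr.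
  by rewrite -{1}thEeq (mem_imset _ _ (@perm_inj _ th)).
have DK : forall e q, e \in E -> r (q + e) - r q \in K.
  move=> e q; rewrite !inE => He; have := WB _ _ _ _ (hR _ _ q He) He.
  by rewrite !addr0 subrr add0r subr0.
have zE : zsub E.
  split; first by rewrite inE.
  by move=> x y; rewrite !inE => hx hy; have := WB _ _ _ _ hx hy; rewrite subr0.
have zK : zsub K.
  split; first by rewrite inE.
  by move=> x y; rewrite !inE => hx hy; have := WB _ _ _ _ hx hy; rewrite subr0.
have [E0|ET] := prim E zE (fun x w hw => KE _ (DK w x hw)); last first.
  pose e0 : Vec n := const_mx 1.
  have e0n : e0 != 0.
    apply/negP => /eqP/rowP/(_ (Ordinal n0)); rewrite !mxE => /eqP; by [].
  have Kn : r e0 - r 0 \in K by have := DK e0 0; rewrite add0r ET inE; apply.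
  have Kn0 : r e0 - r 0 != 0 by rewrite subr_eq0 (inj_eq (@perm_inj _ r)).
  have Eall : forall w, w \in E by move=> w; rewrite ET inE.
  have [K0|KT] := prim K zK (fun x w _ => DK w x (Eall w)).
    by move: Kn; rewrite K0 inE (negbTE Kn0).
  right; apply/setP => [[a b]]; rewrite inE.
  have Ea : a \in E by rewrite ET inE.
  have Kb : b \in K by rewrite KT inE.
  rewrite inE in Ea; rewrite inE in Kb.
  by have := WD _ _ _ _ Ea Kb; rewrite addr0 add0r.
have K0 : forall k, k \in K -> k = 0.
  by move=> k /KE; rewrite E0 inE => /eqP.
have hstar : forall x y, (x, y) \in W -> th (x + y) = x.
  move=> x y H; have := WB _ _ _ _ (hT _ _ H) H; rewrite subrr => h.
  have : th (x + y) - x \in E by rewrite inE.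
  by rewrite E0 inE subr_eq0 => /eqP.
have hconst : forall x y q, (x, y) \in W ->
    r (q + (x + y)) - r q = r (x + y) - r 0.
  move=> x y q H.
  have h : (0, (r (q + (x + y)) - r q) - (r (x + y) - r 0)) \in W.
    apply: (memW _ _ (WB _ _ _ _ (hR x y q H) (hR x y 0 H))).
    by apply: injective_projections => /=; rewrite ?add0r; vr.
  by apply/eqP; rewrite -subr_eq0; apply/eqP; apply: K0; rewrite inE.
pose X := [set a | [exists b, (a, b) \in W]].
have XP : forall a b, (a, b) \in W -> a \in X.
  by move=> a b H; rewrite inE; apply/existsP; exists b.
pose S := [set p.1 + p.2 | p in W].
have SX : S \subset X.
  apply/subsetP=> _ /imsetP[[x y] H ->] /=.
  exact: XP (hR x y 0 H).
have thSX : [set th s | s in S] \subset X.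
  apply/subsetP=> _ /imsetP[_ /imsetP[[x y] H ->] ->] /=.
  by rewrite hstar //; exact: XP H.
have XthS : X \subset [set th s | s in S].
  apply/subsetP=> a; rewrite inE => /existsP[b H].
  rewrite -(hstar _ _ H); apply: imset_f; apply/imsetP; by exists (a, b).
have SeqX : S = X.
  apply/eqP; rewrite eqEcard SX /=.
  by rewrite -(card_imset S (@perm_inj _ th)) subset_leq_card.
have thX : [set th x | x in X] = X.
  have thSeq : [set th s | s in S] = X by apply/eqP; rewrite eqEsubset thSX XthS.
  by rewrite -{1}SeqX thSeq.
have zX : zsub X.
  split; first exact: XP W0.
  move=> a a'; rewrite !inE => /existsP[b Hb] /existsP[b' Hb'].
  by apply/existsP; exists (b - b'); apply: WB.
have iX : forall x w, w \in X -> r (x + w) - r x \in X.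
  move=> x s; rewrite -{1}SeqX => /imsetP[[x0 y0] H ->] /=.
  rewrite hconst //.
  set c := r (x0 + y0) - r 0.
  have H2 : (x0 + y0, y0 + c) \in W by have := hR x0 y0 0 H; rewrite add0r.
  have e1 := hstar _ _ H2.
  have e2 := hstar _ _ H.
  have e3 : th (y0 + c) = y0.
    by apply: (@addrI _ x0); rewrite -{1}e2 -thD e1.
  have Xs : x0 + y0 \in X by rewrite -SeqX; apply/imsetP; exists (x0, y0).
  have Xy : y0 \in X by rewrite -(addKr x0 y0); rewrite -[- x0 + _]addrC; apply: zX.2 => //; exact: XP H.
  have Xyc : y0 + c \in X.
    have : th (y0 + c) \in X by rewrite e3.
    by rewrite -{1}thX (mem_imset _ _ (@perm_inj _ th)).
  by rewrite -(addKr y0 c) addrC; apply: zX.2.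
have [X0|XT] := prim X zX iX.
  left; apply/setP => [[a b]]; rewrite inE; apply/idP/eqP => [H|->]; last exact: W0.
  have : a \in X by exact: XP H.
  rewrite X0 inE => /eqP ea; subst a.
  by rewrite (K0 b) //; rewrite inE.
exfalso; move/negP: nA; apply; apply: affine_AGL => s q.
have : s \in S by rewrite SeqX XT inE.
case/imsetP=> [[x y] H ->] /=.
exact: hconst.
Qed.

Local Close Scope ring_scope.
Unset Implicit Arguments.

Theorem corollary3p4 (n r : nat) (rho theta : 'I_r -> {perm Vec n}) :
  (0 < n)%N -> (0 < r)%N ->
  (forall i, rho i \notin AGL n) ->
  (forall i, theta i \in GL n) ->
  (exists i, [primitive <<rho i |: Tn n>>%g, on [set: Vec n] | 'P]) ->
  [primitive << \bigcup_(i < r) <<[set rhobar (rho i); thetabar (theta i)] :|: T2n n>>%g >>%g,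
     on [set: Vec n * Vec n] | 'P].
Proof.
move=> n0 r0 nA thGL [i0 prim0].
have [A thE] : exists A : 'M['F_2]_n, forall x, theta i0 x = (x *m A)%R.
  by move: (thGL i0); rewrite inE => /existsP[A /forallP h]; exists A => x; apply/eqP.
have inG : forall g, g \in [set rhobar (rho i0); thetabar (theta i0)] :|: T2n n ->
    g \in << \bigcup_(i < r) <<[set rhobar (rho i); thetabar (theta i)] :|: T2n n>>%g >>%g.
  move=> g Hg; apply: mem_gen; apply/bigcupP; exists i0 => //.
  exact: mem_gen.
apply: (@prim_of (VV n) (<< \bigcup_(i < r) <<[set rhobar (rho i); thetabar (theta i)] :|: T2n n>>%g >>)%G).
  move=> [v1 v2].
  have -> : tr ((v1, v2) : VV n) = transl2 v1 v2.
    by apply/permP => [[x y]]; rewrite trE permE.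
  apply: inG; rewrite inE; apply/orP; right.
  by apply/imsetP; exists (v1, v2).
move=> W zW iW.
apply: (core n0 (nA i0) thE) => //.
- move=> U zU iU.
  apply: (@noinvar_of _ (<<rho i0 |: Tn n>>)%G) => //.
  + move=> v; have -> : tr v = transl v by apply/permP => x; rewrite trE permE.
    by apply: mem_gen; rewrite inE; apply/orP; right; apply/imsetP; exists v.
  + apply: invar_gen => g; case/setU1P => [->|]; first exact: iU.
    case/imsetP => v _ -> x w Uw; rewrite !permE /=.
    by have -> : (x + w + v - (x + v) = w)%R by vr.
- move=> x w Ww; apply: iW => //; apply: inG; rewrite !inE eqxx //.
- move=> x w Ww; apply: iW => //; apply: inG; rewrite !inE eqxx orbT //.
Qed.
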